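(* Let $m\ge 1$ and $\epsilon_L>0$. Fix a list of $2m$ spatial points $p_1,\dots,p_{2m}$ (the selected point list assigned to a trajectory). For a trajectory $\tau$ (a finite sequence of spatial points), let $f_k$ denote the number of occurrences of $p_k$ in $\tau$. The local perturbation mechanism $\mathcal{M}$ applied to $\tau$ outputs the vector $(f_1^*,\dots,f_{2m}^* )$ computed as follows. Stage 1: for $k=1,\dots,m$, sample $\eta\sim Lap(-f_k,1/\epsilon_L)$, set $f_k^*=\max(\mathrm{RoundInt}(f_k+\eta),0)$; then set $\bar\mu=\frac1m\sum_{k=1}^m (f_k^*-f_k)$. Stage 2: for $k=m+1,\dots,2m$, sample $\eta\sim Lap(-\bar\mu,1/\epsilon_L)$ and set $f_k^*=\max(\mathrm{RoundInt}(f_k+\eta),0)$. All Laplace samples are drawn independently (given the quantities they depend on). Then $\mathcal{M}$ provides $\epsilon_L$-differential privacy to a trajectory $\tau$, i.e. for any two adjacent trajectories $\tau,\tau'$ (differing in at most one point) and any output $\tilde\tau$, $\Pr[\mathcal{M}(\tau)=\tilde\tau]\le e^{\epsilon_L}\Pr[\mathcal{M}(\tau')=\tilde\tau]$.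
   Context: $Lap(\mu,\lambda)$ denotes the Laplace distribution with mean $\mu$ and scale $\lambda$, density $\frac{1}{2\lambda}\exp(-|x-\mu|/\lambda)$. $\mathrm{RoundInt}$ rounds a real number to the nearest integer. Two trajectories are adjacent if they differ in at most one point, so that their occurrence-count vectors $(f_1,\dots,f_{2m})$ over the fixed points $p_1,\dots,p_{2m}$ differ by at most $1$ in $\ell_1$-norm. *)

(* Defs.v *)
From HB Require Import structures.
From mathcomp Require Import all_boot all_order all_algebra.
From mathcomp Require Import all_classical all_reals all_analysis.
Set Implicit Arguments. Unset Strict Implicit. Unset Printing Implicit Defensive.
Import Order.TTheory GRing.Theory Num.Theory.
Local Open Scope classical_set_scope.
Local Open Scope ring_scope.

Definition lap_pdf {R : realType} (mu lam x : R) : R :=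
  (2 * lam)^-1 * expR (- `|x - mu| / lam).

Definition is_laplace {R : realType} {d : measure_display} {T : measurableType d}
  (P : probability T R) (X : T -> R) (mu lam : R) : Prop :=
  forall A : set R, measurable A ->
    P (X @^-1` A) = (\int[@lebesgue_measure R]_(x in A) (lap_pdf mu lam x)%:E)%E.

Definition mutually_independent {R : realType} {d : measure_display}
  {T : measurableType d} (P : probability T R) (n : nat) (X : 'I_n -> T -> R) : Prop :=
  forall A : 'I_n -> set R, (forall i, measurable (A i)) ->
    P (\bigcap_(i in [set: 'I_n]) (X i @^-1` A i)) =
    (\prod_(i < n) P (X i @^-1` A i))%E.

Definition RoundInt {R : realType} (x : R) : int := Num.floor (x + 2^-1).

Definition occ {T : eqType} (n : nat) (p : 'I_n -> T) (tau : seq T) (k : 'I_n) : nat :=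
  count_mem (p k) tau.

Definition adjacent_traj {T : eqType} (n : nat) (p : 'I_n -> T) (tau tau' : seq T) : Prop :=
  (\sum_(k < n) `|(occ p tau k)%:Z - (occ p tau' k)%:Z|%N <= 1)%N.

(* The local perturbation mechanism, driven by the raw noise xi_k ~ Lap(0, 1/eps):
   the Laplace sample of coordinate k with mean c is eta_k = c + xi_k. *)
Section Mechanism.
Context {R : realType} {Omega : Type} {T : eqType} (m : nat)
  (p : 'I_(2 * m) -> T) (xi : 'I_(2 * m) -> Omega -> R) (tau : seq T).

Let f (k : 'I_(2 * m)) : R := (occ p tau k)%:R.

Definition stage1 (k : 'I_(2 * m)) (w : Omega) : int :=
  Order.max (RoundInt (f k + (- f k + xi k w))) 0%Z.

Definition mubar (w : Omega) : R :=
  m%:R^-1 * \sum_(k < 2 * m | (val k < m)%N) ((stage1 k w)%:~R - f k).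

Definition mech (w : Omega) (k : 'I_(2 * m)) : int :=
  if (val k < m)%N then stage1 k w
  else Order.max (RoundInt (f k + (- mubar w + xi k w))) 0%Z.
End Mechanism.

(* Main.v *)
Require Import Defs.
From HB Require Import structures.
From mathcomp Require Import all_boot all_order all_algebra.
From mathcomp Require Import all_classical all_reals all_analysis.
From mathcomp Require Import measurable_realfun ring lra zify.
Import Order.TTheory GRing.Theory Num.Theory.
Local Open Scope classical_set_scope.
Local Open Scope ring_scope.

Section S.
Context {R : realType}.

Lemma shift_mfun (e : R) : measurable_fun [set: R] (fun x => x + e).
Proof. by apply: measurable_funD => //; exact: measurable_cst. Qed.

Definition shiftleb (e : R) : set (measurableTypeR R) -> \bar R := @pushforward _ _ (measurableTypeR R) (measurableTypeR R) R (@lebesgue_measure R) (fun x => x + e).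

Section inst.
Variable e : R.
Let mf := shift_mfun e.
Local Open Scope ereal_scope.
Let p0 : shiftleb e set0 = 0.
Proof. by rewrite /shiftleb /pushforward preimage_set0 measure0. Qed.
Let pge0 A : 0 <= shiftleb e A.
Proof. exact: measure_ge0. Qed.
Let psa : semi_sigma_additive (shiftleb e).
Proof.
move=> F mF tF mUF; rewrite /shiftleb /pushforward preimage_bigcup.
apply: measure_semi_sigma_additive.
- by move=> n; rewrite -[X in measurable X]setTI; apply: mf => //; exact: mF.
- apply/trivIsetP => /= i j _ _ ij; rewrite -preimage_setI.
  by move/trivIsetP : tF => /(_ _ _ _ _ ij) ->//; rewrite preimage_set0.
- by rewrite -preimage_bigcup -[X in measurable X]setTI; apply: mf => //; exact: bigcup_measurable.
Qed.
HB.instance Definition _ := isMeasure.Build _ _ _ (shiftleb e) p0 pge0 psa.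
End inst.

Lemma leb_shift (e : R) (A : set R) : measurable A ->
  lebesgue_measure A = shiftleb e A.
Proof.
move=> mA; have := @lebesgue_measure_unique R (shiftleb e). move=> H. apply: H => //. move=> X [[a b] /= _ <-].
rewrite /shiftleb /pushforward.
have -> : (fun x => x + e) @^-1` `]a, b] = `]a - e, b - e]%classic.
  by apply/seteqP; split => x /=; rewrite !in_itv /= ltrBlDr lerBrDr.
rewrite !lebesgue_measure_itv /= !lte_fin ltrD2r; case: ifP => // _.
by rewrite -EFinD; congr EFin; rewrite opprB addrA subrK.
Qed.

Lemma pdf_mfun (mu lam : R) : measurable_fun [set: R] (lap_pdf mu lam).
Proof.
rewrite /lap_pdf; apply: measurable_funM; first exact: measurable_cst.
apply: measurableT_comp; first exact: measurable_expR.
apply: measurable_funM; last exact: measurable_cst.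
apply: measurableT_comp; first exact: oppr_measurable.
apply: measurableT_comp; first exact: normr_measurable.
by apply: measurable_funB; [exact: measurable_id|exact: measurable_cst].
Qed.

Lemma pdf_ge0 (mu lam x : R) : 0 < lam -> 0 <= lap_pdf mu lam x.
Proof.
move=> l0; rewrite /lap_pdf mulr_ge0 ?expR_ge0 // invr_ge0 mulr_ge0 //; exact: ltW.
Qed.

Lemma pdf_shift (eps e y : R) : 0 < eps ->
  lap_pdf 0 eps^-1 (y + e) <= expR (eps * `|e|) * lap_pdf 0 eps^-1 y.
Proof.
move=> e0; rewrite /lap_pdf !subr0 mulrCA ler_wpM2l //.
  by rewrite invr_ge0 mulr_ge0 // invr_ge0 ltW.
rewrite -expRD ler_expR invrK !mulNr (mulrC `|_|) (mulrC `|y|) -mulrBr.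
rewrite -mulrN; apply: ler_wpM2l; first exact: ltW.
have := ler_normD (y + e) (- e); rewrite addrK normrN => h; lra.
Qed.

Lemma shift_int (eps e : R) (B : set R) : 0 < eps -> measurable B ->
  (\int[lebesgue_measure]_(x in B) (lap_pdf 0 eps^-1 x)%:E <=
   (expR (eps * `|e|))%:E *
   \int[lebesgue_measure]_(x in (fun y : R => (y + e)%R) @^-1` B) (lap_pdf 0 eps^-1 x)%:E)%E.
Proof.
move=> e0 mB.
have -> : (\int[lebesgue_measure]_(x in B) (lap_pdf 0 eps^-1 x)%:E =
   \int[shiftleb e]_(x in B) (lap_pdf 0 eps^-1 x)%:E)%E.
  by apply: eq_measure_integral => //= A mA _; exact: leb_shift.
have mpre : measurable ((fun y => y + e) @^-1` B).
  by rewrite -[X in measurable X]setTI; apply: shift_mfun.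
rewrite /shiftleb ge0_integral_pushforward //; last 3 first.
- exact: shift_mfun.
- apply/measurable_EFinP; exact: measurable_funS (pdf_mfun _ _).
- by move=> y _; rewrite lee_fin pdf_ge0 // invr_gt0.
rewrite -ge0_integralZl_EFin ?expR_ge0 //.
apply: ge0_le_integral => //.
- by move=> y _; rewrite lee_fin pdf_ge0 // invr_gt0.
- apply/measurable_EFinP; apply: (@measurable_funS _ _ _ _ setT) => //.
  by apply: measurableT_comp; [exact: pdf_mfun|exact: shift_mfun].
- apply/measurable_EFinP; apply: measurable_funM; first exact: measurable_cst.
  exact: measurable_funS (pdf_mfun _ _).
- by move=> y _ /=; rewrite lee_fin pdf_shift.
- by move=> y _; rewrite lee_fin pdf_ge0 // invr_gt0.
- apply/measurable_EFinP; exact: measurable_funS (pdf_mfun _ _).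
Qed.
End S.
Section C.
Context {R : realType}.

Lemma count_hi (m : nat) :
  \sum_(k < 2 * m | ~~ (val k < m)%N) (1 : R) = m%:R.
Proof.
rewrite -(big_mkord (fun k => ~~ (k < m)%N) (fun _ => (1:R))).
rewrite (@big_cat_nat _ _ _ m) //=; last by rewrite leq_pmull.
rewrite big_nat_cond big_pred0; last by move=> i; rewrite andbN.
rewrite add0r big_nat_cond (eq_bigl (fun i => (m <= i < 2 * m)%N && true)); last first.
  by move=> i; rewrite -leqNgt; case: (m <= i)%N; rewrite ?andbT ?andbF.
rewrite -big_nat_cond sumr_const_nat; congr (_%:R); rewrite mul2n -addnn addnK //.
Qed.

Definition muf {m : nat} (o H : 'I_(2 * m) -> R) :=
  m%:R^-1 * \sum_(k < 2 * m | (val k < m)%N) (o k - H k).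
Definition cf {m : nat} (o H : 'I_(2 * m) -> R) (k : 'I_(2 * m)) :=
  if (val k < m)%N then 0 else H k - muf o H.

Lemma sum_bound (m : nat) (o : 'I_(2 * m) -> R) (F G : 'I_(2 * m) -> R) :
  (0 < m)%N -> \sum_k `|F k - G k| <= 1 ->
  \sum_k `|cf o G k - cf o F k| <= 1.
Proof.
move=> m0 hs; set mu := muf o; set c := cf o.
set S1 := \sum_(k < 2 * m | (val k < m)%N) `|F k - G k|.
have hmu : `|mu G - mu F| <= m%:R^-1 * S1.
  rewrite /mu -mulrBr normrM ger0_norm ?invr_ge0 // ler_wpM2l ?invr_ge0 //.
  rewrite -sumrB; apply: le_trans (ler_norm_sum _ _ _) _.
  by apply: ler_sum => k _; have -> : o k - G k - (o k - F k) = F k - G k by ring.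

have hk : forall k, `|c G k - c F k| <=
    (if (val k < m)%N then 0 else `|F k - G k| + m%:R^-1 * S1).
  move=> k; rewrite /c /cf; case: ifP => _; first by rewrite subrr normr0.
  rewrite -/(mu G) -/(mu F).
  have -> : G k - mu G - (F k - mu F) = - (F k - G k) - (mu G - mu F) by ring.
  by apply: le_trans (ler_normB _ _) _; rewrite normrN lerD2l.
apply: le_trans (ler_sum _ (fun k _ => hk k)) _.
rewrite (bigID (fun k : 'I_(2 * m) => (val k < m)%N)) /=.
rewrite big1 ?add0r; last by move=> k ->.
under eq_bigr => k /negPf -> do [].
rewrite big_split /= [X in _ + X <= _](eq_bigr (fun _ => 1 * (m%:R^-1 * S1))); last by move=> *; rewrite mul1r.
rewrite -mulr_suml count_hi.
rewrite mulrA mulfV ?mul1r; last by rewrite pnatr_eq0 -lt0n.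
rewrite addrC /S1. rewrite [X in X <= _](_ : _ = \sum_k `|F k - G k|) //. by rewrite [RHS](bigID (fun k : 'I_(2 * m) => (val k < m)%N)) /=.
Qed.
End C.
Lemma int_char (a o : int) : (Order.max a 0%Z == o) =
  if (o < 0)%R then false else if o == 0 then (a < 1)%R else (o <= a)%R && (a < o + 1)%R.
Proof.
case: ifP => h1; [|case: ifP => h2]; apply/idP/idP; lia.
Qed.

Section M.
Context {R : realType}.

Lemma B_char (z : R) (o : int) : (Order.max (Num.floor z) 0%Z == o) =
  if (o < 0)%R then false else if o == 0 then z < 1 else (o%:~R <= z) && (z < (o+1)%:~R).
Proof.
rewrite int_char -(floor_lt_int z 1) -floor_ge_int -floor_lt_int //.
Qed.

Lemma meas_lt (c a : R) : measurable [set x : R | c + x < a].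
Proof.
have -> : [set x : R | c + x < a] = `]-oo, a - c[%classic.
  by apply/seteqP; split => x /=; rewrite in_itv /= => h; lra.
exact: measurable_itv.
Qed.

Lemma meas_ge (c a : R) : measurable [set x : R | a <= c + x].
Proof.
have -> : [set x : R | a <= c + x] = `[a - c, +oo[%classic.
  by apply/seteqP; split => x /=; rewrite in_itv /= => h; lra.
exact: measurable_itv.
Qed.

Lemma meas_B (c : R) (o : int) :
  measurable [set x : R | Order.max (RoundInt (c + x)) 0%Z = o].
Proof.
have -> : [set x : R | Order.max (RoundInt (c + x)) 0%Z = o] =
  [set x | Order.max (Num.floor ((c + 2^-1) + x)) 0%Z == o].
  apply/seteqP; split => x /=; rewrite /RoundInt (addrAC c x).
  by move=> ->.
  by move=> /eqP->.
set c' := c + 2^-1.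
case: (ltP o 0) => h1.
  have -> : [set x | Order.max (Num.floor (c' + x)) 0%Z == o] = set0.
    by apply/seteqP; split => x //=; rewrite B_char h1.
  exact: measurable0.
case: (eqVneq o 0) => h2.
  have -> : [set x | Order.max (Num.floor (c' + x)) 0%Z == o] = [set x | c' + x < 1].
    by apply/seteqP; split => x /=; rewrite B_char h2.
  exact: meas_lt.
have E : forall x, (Order.max (Num.floor (c' + x)) 0%Z == o) =
    (o%:~R <= c' + x) && (c' + x < (o + 1)%:~R).
  by move=> x; rewrite B_char (negPf h2) ifF //; rewrite ltNge h1.
have -> : [set x | Order.max (Num.floor (c' + x)) 0%Z == o] =
  [set x | o%:~R <= c' + x] `&` [set x | c' + x < (o + 1)%:~R].
  apply/seteqP; split => x /=; rewrite E.
    by move/andP.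
  by case=> -> ->.
apply: measurableI; [exact: meas_ge|exact: meas_lt].
Qed.
End M.

Section P.
Context {R : realType}.
Local Open Scope ereal_scope.

Lemma prod_le (n : nat) (a b : 'I_n -> \bar R) (d : 'I_n -> R) (eps : R) :
  (forall i, 0 <= a i) -> (forall i, 0 <= b i) ->
  (forall i, a i <= (expR (eps * d i))%:E * b i) -> (0 <= eps)%R ->
  (\sum_i d i <= 1)%R ->
  \prod_i a i <= (expR eps)%:E * \prod_i b i.
Proof.
move=> a0 b0 ab e0 d1.
apply: (@le_trans _ _ (\prod_i ((expR (eps * d i))%:E * b i))).
  have : 0 <= \prod_i a i <= \prod_i ((expR (eps * d i))%:E * b i).
    elim/big_ind2: _ => //.
    - by rewrite lexx lee01.
    - move=> x1 x2 y1 y2 /andP[x0 x12] /andP[y0 y12].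
      by rewrite mule_ge0 //= lee_pmul.
    - by move=> i _; rewrite a0 ab.
  by case/andP.
rewrite big_split /= prodEFin -expR_sum.
apply: lee_wpmul2r; first exact: prode_ge0.
rewrite lee_fin ler_expR -mulr_sumr.
by rewrite ler_piMr.
Qed.
End P.

Lemma mubar_eq {R : realType} {m : nat} {T : eqType} {Omega : Type} {p : 'I_(2 * m) -> T}
  {xi : 'I_(2 * m) -> Omega -> R} {tau : seq T} {out : 'I_(2 * m) -> int} {w} :
  (forall k, (val k < m)%N -> stage1 p xi tau k w = out k) ->
  mubar p xi tau w = muf (fun k => (out k)%:~R) (fun k => (occ p tau k)%:R).
Proof.
move=> H; rewrite /mubar /muf; congr (_ * _)%R.
by apply: eq_bigr => k hk; rewrite H.
Qed.

Lemma set_eq {R : realType} (m : nat) (T : eqType) (Omega : Type) (p : 'I_(2 * m) -> T)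
  (xi : 'I_(2 * m) -> Omega -> R) (tau : seq T) (out : 'I_(2 * m) -> int) :
  [set w | mech p xi tau w = out] =
  \bigcap_(i in [set: 'I_(2 * m)]) (xi i @^-1`
     [set x : R | Order.max (RoundInt (cf (fun k => (out k)%:~R)
         (fun k => (occ p tau k)%:R) i + x)) 0%Z = out i]).
Proof.
apply/seteqP; split => w /=.
- move=> H i _ /=.
  have Hs : forall k, (val k < m)%N -> stage1 p xi tau k w = out k.
    by move=> k hk; rewrite -H /mech hk.
  rewrite /cf; have -> : out i = mech p xi tau w i by rewrite H.
  rewrite /mech; case: ifP => hi.
    by rewrite /stage1 add0r addrA subrr add0r.
  by rewrite (mubar_eq Hs) addrA.
- move=> H.
  have Hs : forall k, (val k < m)%N -> stage1 p xi tau k w = out k.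
    move=> k hk; have := H k Logic.I; rewrite /= /cf hk => <-.
    by rewrite /stage1 add0r addrA subrr add0r.
  apply/funext => i; have := H i Logic.I; rewrite /= /mech /cf.
  case: ifP => hi; first by move=> _; exact: Hs.
  by rewrite (mubar_eq Hs) addrA.
Qed.

Lemma adj_R {R : realType} (T : eqType) (n : nat) (p : 'I_n -> T) tau tau' :
  adjacent_traj p tau tau' ->
  \sum_k `|((occ p tau k)%:R : R) - (occ p tau' k)%:R| <= 1.
Proof.
rewrite /adjacent_traj => h.
have -> : \sum_k `|((occ p tau k)%:R : R) - (occ p tau' k)%:R| =
  (\sum_k `|(occ p tau k)%:Z - (occ p tau' k)%:Z|%N)%:R.
  rewrite natr_sum; apply: eq_bigr => k _.
  by rewrite natr_absz intr_norm rmorphB.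
by rewrite lern1.
Qed.

Theorem theorem3 (R : realType) (d : measure_display) (Omega : measurableType d)
  (P : probability Omega R) (T : eqType) (m : nat) (epsL : R)
  (p : 'I_(2 * m) -> T) (xi : 'I_(2 * m) -> Omega -> R) :
  (0 < m)%N -> 0 < epsL ->
  (forall k, measurable_fun setT (xi k)) ->
  (forall k, is_laplace P (xi k) 0 epsL^-1) ->
  mutually_independent P xi ->
  forall (tau tau' : seq T), adjacent_traj p tau tau' ->
  forall out : 'I_(2 * m) -> int,
    (P [set w | mech p xi tau w = out]
      <= (expR epsL)%:E * P [set w | mech p xi tau' w = out])%E.
Proof.
move=> m0 e0 mxi hlap hind tau tau' hadj out.
set o := fun k : 'I_(2 * m) => ((out k)%:~R : R).
set F := fun k : 'I_(2 * m) => ((occ p tau k)%:R : R).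
set G := fun k : 'I_(2 * m) => ((occ p tau' k)%:R : R).
pose Bs (c : R) (z : int) := [set x : R | Order.max (RoundInt (c + x)) 0%Z = z].
have hP : forall H, P [set w | mech p xi (if H then tau else tau') w = out] =
  (\prod_(i < 2 * m) \int[lebesgue_measure]_(x in Bs (cf o (if H then F else G) i) (out i))
      (lap_pdf 0 epsL^-1 x)%:E)%E.
  move=> H; rewrite set_eq hind; last by move=> i; exact: meas_B.
  apply: eq_bigr => i _; rewrite hlap //; last exact: meas_B.
  by case: H.
have := hP true; rewrite /= => ->.
have := hP false; rewrite /= => ->.
apply: (@prod_le R (2 * m) _ _ (fun i => `|cf o G i - cf o F i|)).
all: try done.
- by move=> i; apply: integral_ge0 => x _; rewrite lee_fin pdf_ge0 // invr_gt0.
- by move=> i; apply: integral_ge0 => x _; rewrite lee_fin pdf_ge0 // invr_gt0.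
- move=> i.
  have := @shift_int R epsL (cf o G i - cf o F i) (Bs (cf o F i) (out i)) e0 (meas_B _ _).
  suff -> : (fun y : R => (y + (cf o G i - cf o F i))%R) @^-1` Bs (cf o F i) (out i) =
            Bs (cf o G i) (out i) by [].
  have E y : (cf o F i + (y + (cf o G i - cf o F i)) = cf o G i + y)%R by ring.
  by apply/seteqP; split => y; rewrite /Bs /preimage /= E.
- exact: ltW.
- by apply: sum_bound => //; rewrite /F /G; exact: adj_R.
Qed.
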